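(* For every $j\in[N-1]$ and $\lambda\in\{0,1\}^N$ one has ${\bf s}_j(\mathbb{b}(\lambda))=\mathbb{b}(s_j\lambda)$, and, for the extension of ${\bf s}_j$ to $\mathbb{V}_N^{\mathrm{loc}}$, ${\bf s}_j(\mathbb{b}_\lambda)=\mathbb{b}_{s_j\lambda}$.
   Context: Fix $N\ge2$. $V=\mathbb{C}^2$ with basis $v_0,v_1$, ${\bf P}=\mathbb{C}[t_1,\dots,t_N]$, $\mathbb{V}_N=V^{\otimes N}\otimes{\bf P}$ with basis $v_\lambda$, $\lambda\in\{0,1\}^N$. Matrices on $V\otimes V$ are in the ordered basis $v_0\otimes v_0,v_0\otimes v_1,v_1\otimes v_0,v_1\otimes v_1$ (columns = images); $L(x,t)=\begin{pmatrix}1&0&0&0\\0&x+t&1&0\\0&1&0&0\\0&0&0&1\end{pmatrix}$. On $V[x]\otimes\mathbb{V}_N$ (factors $0,\dots,N$) let $M(x)=L_{0N}(x,t_N)\cdots L_{01}(x,t_1)$, $L_{0j}(x,t_j)$ acting as $L(x,t_j)$ on factors $0,j$ (factor $0$ first); define the ${\bf P}[x]$-linear operator $C(x)$ on $\mathbb{V}_N[x]$ by $M(x)(v_0\otimes w)=v_0\otimes A(x)w+v_1\otimes C(x)w$. For $\lambda\in\{0,1\}^N$ let $I_0=\{i_1<\dots<i_k\}=\{i:\lambda_i=0\}$ and $\mathbb{b}(\lambda)=C(-t_{i_1})\cdots C(-t_{i_k})v_{(1,\dots,1)}\in\mathbb{V}_N$. Let ${\bf P}^{\mathrm{loc}}={\bf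 P}[(t_a-t_b)^{-1}:a\ne b]$, $\mathbb{V}_N^{\mathrm{loc}}=V^{\otimes N}\otimes{\bf P}^{\mathrm{loc}}$, and $\mathbb{b}_\lambda=\prod_{b\in I_0,\,a\notin I_0}(t_a-t_b)^{-1}\,\mathbb{b}(\lambda)$. The operator ${\bf s}_j$ on $\mathbb{V}_N$ (and on $\mathbb{V}_N^{\mathrm{loc}}$) is defined by ${\bf s}_j(fv_\lambda)=s_j(f)\,(v_\lambda+(t_j-t_{j+1})v_{s_j\lambda})$ if $\lambda_j<\lambda_{j+1}$ and ${\bf s}_j(fv_\lambda)=s_j(f)v_\lambda$ otherwise, where $s_j\lambda$ swaps $\lambda_j,\lambda_{j+1}$ and $s_j(f)$ swaps $t_j,t_{j+1}$. *)

(* Defs.v *)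
From HB Require Import structures.
From Stdlib Require Import Rdefinitions.
From mathcomp Require Import all_boot all_order all_algebra all_fingroup.
From mathcomp Require Import Rstruct complex.
From mathcomp Require Import mpoly.
Set Implicit Arguments. Unset Strict Implicit. Unset Printing Implicit Defensive.
Import GRing.Theory.
Local Open Scope ring_scope.

Definition Cx : fieldType := complex Rdefinitions.R.

(* P = C[t_1,...,t_N]; variable t_{i+1} is 'X_i, i : 'I_N (0-based). *)
Definition Pol (N : nat) := {mpoly Cx[N]}.

(* Indices lambda in {0,1}^N: false = 0, true = 1. *)
Definition lam (N : nat) := {ffun 'I_N -> bool}.

(* An element of V^{(x)N} (x) R is the coefficient family (w_lambda) on the basis v_lambda. *)
Definition Vec (N : nat) (R : Type) := {ffun lam N -> R}.
(* Element of V (x) V^{(x)N} (x) R (factor 0 first): coefficients on v_mu (x) v_lambda. *)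
Definition Vec0 (N : nat) (R : Type) := {ffun bool * lam N -> R}.

Section Generic.
Variables (N : nat) (R : comNzRingType).

Definition ev (l : lam N) : Vec N R := [ffun m => (m == l)%:R].

Definition ones : lam N := [ffun _ => true].

Definition upd (l : lam N) (j : 'I_N) (b : bool) : lam N :=
  [ffun i => if i == j then b else l i].

Definition swapl (l : lam N) (j j' : 'I_N) : lam N :=
  [ffun i => if i == j then l j' else if i == j' then l j else l i].

(* index of v_b0 (x) v_b1 in the ordered basis v0v0, v0v1, v1v0, v1v1 *)
Definition pidx (b0 b1 : bool) : 'I_4 := inord (2 * b0 + b1).

(* the matrix L(x,t) (columns = images) *)
Definition Lmat (x t : R) : 'M[R]_4 :=
  \matrix_(i < 4, k < 4)
    nth 0 (nth [::] [:: [:: 1; 0; 0; 0];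
                        [:: 0; x + t; 1; 0];
                        [:: 0; 1; 0; 0];
                        [:: 0; 0; 0; 1]] i) k.

Definition Lop (x tj : R) (j : 'I_N) (w : Vec0 N R) : Vec0 N R :=
  [ffun p : bool * lam N =>
     \sum_(mu : bool) \sum_(b : bool)
        Lmat x tj (pidx p.1 (p.2 j)) (pidx mu b) * w (mu, upd p.2 j b)].

(* M(x) = L_{0N}(x,t_N) ... L_{01}(x,t_1)  (L_{01} applied first) *)
Definition Mop (t : 'I_N -> R) (x : R) (w : Vec0 N R) : Vec0 N R :=
  foldl (fun w j => Lop x (t j) j w) w (enum 'I_N).

(* C(x): M(x)(v_0 (x) w) = v_0 (x) A(x) w + v_1 (x) C(x) w *)
Definition Cop (t : 'I_N -> R) (x : R) (w : Vec N R) : Vec N R :=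
  [ffun l => Mop t x [ffun p : bool * lam N => if p.1 then 0 else w p.2] (true, l)].

(* b(lambda) = C(-t_{i_1}) ... C(-t_{i_k}) v_{(1,...,1)}, I_0 = {i_1 < ... < i_k} *)
Definition bvec (t : 'I_N -> R) (l : lam N) : Vec N R :=
  foldr (fun i w => Cop t (- t i) w) (ev ones) [seq i <- enum 'I_N | ~~ l i].

Definition sop (sigma : R -> R) (tj tj1 : R) (j j' : 'I_N) (w : Vec N R) : Vec N R :=
  [ffun m => \sum_(l : lam N)
     sigma (w l) * ((l == m)%:R +
        (if ~~ l j && l j' then (tj - tj1) * (swapl l j j' == m)%:R else 0))].

End Generic.

Section Concrete.
Variable N : nat.

Definition tP (i : 'I_N) : Pol N := 'X_i.

Definition sjP (j j' : 'I_N) (f : Pol N) : Pol N := msym (tperm j j') f.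

(* P^loc is realised inside the fraction field Frac(P). *)
Definition Kf := {fraction (Pol N)}.

Definition sjK (j j' : 'I_N) (x : Kf) : Kf :=
  let r := generic_quotient.repr x in tofrac (sjP j j' r.1) / tofrac (sjP j j' r.2).

Definition bP (l : lam N) : Vec N (Pol N) := bvec tP l.

Definition bK (l : lam N) : Vec N Kf :=
  [ffun m => (\prod_(b : 'I_N | ~~ l b) \prod_(a : 'I_N | l a)
                 (tofrac (tP a - tP b))^-1) * tofrac (bP l m)].

Definition sopP (j j' : 'I_N) : Vec N (Pol N) -> Vec N (Pol N) :=
  sop (sjP j j') (tP j) (tP j') j j'.

Definition sopK (j j' : 'I_N) : Vec N Kf -> Vec N Kf :=
  sop (sjK j j') (tofrac (tP j)) (tofrac (tP j')) j j'.

End Concrete.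

(* Main.v *)
Require Import Defs.
From mathcomp Require Import all_boot all_algebra.
From HB Require Import structures.
From mathcomp Require Import all_boot all_order all_algebra all_fingroup.
From mathcomp Require Import mpoly.
From mathcomp Require Import ring.
Set Implicit Arguments. Unset Strict Implicit. Unset Printing Implicit Defensive.
Import GRing.Theory.
Local Open Scope ring_scope.

Section Gen.
Variables (N : nat) (R : comNzRingType).

Definition Lgen (a s : bool) (x t : R) (f : bool -> bool -> R) : R :=
  match a, s with
  | false, false => f false false
  | false, true => (x + t) * f false true + f true false
  | true, false => f false true
  | true, true => f true true
  end.

Lemma eq_Lgen a s x t f g : (forall mu b, f mu b = g mu b) -> Lgen a s x t f = Lgen a s x t g.
Proof. by move=> H; case: a; case: s; rewrite /= !H. Qed.

Lemma LopE x t (i : 'I_N) (w : Vec0 N R) a m :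
  Lop x t i w (a, m) = Lgen a (m i) x t (fun mu b => w (mu, upd m i b)).
Proof.
rewrite /Lop ffunE /= !big_bool /= /pidx.
by case: a; case: (m i); rewrite !mxE /= ?inordK //=; ring.
Qed.

Lemma rm_Lgen (sg : {rmorphism R -> R}) a s x t f :
  sg (Lgen a s x t f) = Lgen a s (sg x) (sg t) (fun mu b => sg (f mu b)).
Proof. by case: a; case: s; rewrite /= ?rmorphD ?rmorphM ?rmorphD. Qed.

Lemma Lgen_lin a s x t f g c :
  Lgen a s x t (fun mu b => f mu b + c * g mu b) = Lgen a s x t f + c * Lgen a s x t g.
Proof. by case: a; case: s => /=; ring. Qed.

Variables (j j' : 'I_N).
Hypothesis jj' : j != j'.

Lemma swapl_j (l : lam N) : swapl l j j' j = l j'.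
Proof. by rewrite ffunE eqxx. Qed.
Lemma swapl_j' (l : lam N) : swapl l j j' j' = l j.
Proof. by rewrite ffunE eq_sym (negbTE jj') eqxx. Qed.
Lemma swapl_o (l : lam N) i : i != j -> i != j' -> swapl l j j' i = l i.
Proof. by move=> h1 h2; rewrite ffunE (negbTE h1) (negbTE h2). Qed.
Lemma swaplK (l : lam N) : swapl (swapl l j j') j j' = l.
Proof.
apply/ffunP=> i.
case: (eqVneq i j) => [->|h1]; first by rewrite swapl_j swapl_j'.
case: (eqVneq i j') => [->|h2]; first by rewrite swapl_j' swapl_j.
by rewrite !swapl_o.
Qed.

Lemma sopE sg a b (w : Vec N R) m :
  sop sg a b j j' w m = sg (w m) + (if m j && ~~ m j' then a - b else 0) * sg (w (swapl m j j')).
Proof.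
rewrite ffunE; under eq_bigr do rewrite mulrDr.
rewrite big_split /= (bigD1 m) //= eqxx mulr1 big1 => [|l /negbTE ->]; last by rewrite mulr0.
rewrite addr0 (bigD1 (swapl m j j')) //= swaplK eqxx swapl_j swapl_j' big1 => [|l hl].
  by rewrite addr0; case: (m j); case: (m j') => /=; rewrite ?mulr0 ?mul0r ?mulr1 // mulrC.
case: ifP; rewrite ?mulr0 // => _.
suff -> : (swapl l j j' == m) = false by rewrite mulr0 mulr0.
apply/negbTE; apply: contra hl => /eqP <-; by rewrite swaplK.
Qed.

Lemma upd_o (m : lam N) i b k : k != i -> upd m i b k = m k.
Proof. by move=> h; rewrite ffunE (negbTE h). Qed.
Lemma upd_i (m : lam N) i b : upd m i b i = b.
Proof. by rewrite ffunE eqxx. Qed.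
Lemma upd_upd (m : lam N) i b c : upd (upd m i b) i c = upd m i c.
Proof. by apply/ffunP=> k; rewrite !ffunE; case: eqP. Qed.
Lemma upd_updC (m : lam N) i k b c : i != k -> upd (upd m i b) k c = upd (upd m k c) i b.
Proof.
move=> h; apply/ffunP=> q; rewrite !ffunE.
by case: (eqVneq q k) => [->|//]; rewrite eq_sym (negbTE h).
Qed.
Lemma upd_swapl_o (m : lam N) i b : i != j -> i != j' ->
  upd (swapl m j j') i b = swapl (upd m i b) j j'.
Proof.
move=> h1 h2; apply/ffunP=> q.
case: (eqVneq q j) => [->|q1]; first by rewrite upd_o 1?eq_sym // !swapl_j upd_o // eq_sym.
case: (eqVneq q j') => [->|q2]; first by rewrite upd_o 1?eq_sym // !swapl_j' upd_o // eq_sym.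
rewrite swapl_o //; case: (eqVneq q i) => [->|q3]; first by rewrite !upd_i.
by rewrite !upd_o // swapl_o.
Qed.
Lemma upd_swapl_jj (m : lam N) e b :
  upd (upd (swapl m j j') j e) j' b = upd (upd m j e) j' b.
Proof.
apply/ffunP=> q.
case: (eqVneq q j') => [->|q2]; first by rewrite !upd_i.
rewrite !(upd_o _ _ q2); case: (eqVneq q j) => [->|q1]; first by rewrite !upd_i.
by rewrite !upd_o // swapl_o.
Qed.
Lemma swapl_updjj (m : lam N) e b :
  swapl (upd (upd m j e) j' b) j j' = upd (upd m j b) j' e.
Proof.
apply/ffunP=> q.
case: (eqVneq q j') => [->|q2]; first by rewrite swapl_j' upd_i upd_o // upd_i.
case: (eqVneq q j) => [->|q1]; first by rewrite swapl_j upd_i (upd_o _ _ jj') upd_i.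
by rewrite swapl_o // !upd_o.
Qed.

Variable sg : {rmorphism R -> R}.
Variable c : R.

Definition T0 (w : Vec0 N R) : Vec0 N R :=
  [ffun p => sg (w p) + (if p.2 j && ~~ p.2 j' then c else 0) * sg (w (p.1, swapl p.2 j j'))].

Lemma T0_L1 x t (i : 'I_N) w : i != j -> i != j' -> sg t = t ->
  T0 (Lop x t i w) = Lop (sg x) t i (T0 w).
Proof.
move=> h1 h2 sgt; apply/ffunP=> -[a m].
rewrite [LHS]ffunE /= !LopE !rm_Lgen sgt swapl_o // -Lgen_lin.
apply: eq_Lgen => mu b; rewrite ffunE /= !upd_o 1?eq_sym //.
by rewrite upd_swapl_o.
Qed.

Lemma pair_id a s1 s2 (H : bool -> bool -> bool -> R) X tj tj' :
  Lgen a s2 X tj (fun mu b => Lgen mu s1 X tj' (fun nu e => H nu e b)) +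
  (if s1 && ~~ s2 then tj - tj' else 0) *
     Lgen a s1 X tj (fun mu b => Lgen mu s2 X tj' (fun nu e => H nu e b))
= Lgen a s2 X tj' (fun mu b => Lgen mu s1 X tj
     (fun nu e => H nu e b + (if e && ~~ b then tj - tj' else 0) * H nu b e)).
Proof. by case: a; case: s1; case: s2 => /=; ring. Qed.

Lemma rm_Lgen2 a s s' x t t' (F : bool -> bool -> bool -> R) :
  sg (Lgen a s x t (fun mu b => Lgen mu s' x t' (fun nu e => F nu e b))) =
  Lgen a s (sg x) (sg t) (fun mu b => Lgen mu s' (sg x) (sg t') (fun nu e => sg (F nu e b))).
Proof. by rewrite rm_Lgen; apply: eq_Lgen => mu b; rewrite rm_Lgen. Qed.

Lemma LopLop (x t t' : R) (w : Vec0 N R) (a : bool) (m : lam N) (F : bool -> bool -> bool -> R) :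
  (forall nu e b, w (nu, upd (upd m j e) j' b) = F nu e b) ->
  Lop x t' j' (Lop x t j w) (a, m) =
  Lgen a (m j') x t' (fun mu b => Lgen mu (m j) x t (fun nu e => F nu e b)).
Proof.
move=> hF; rewrite LopE; apply: eq_Lgen => mu b; rewrite LopE (upd_o _ _ jj').
by apply: eq_Lgen => nu e; rewrite upd_updC 1?eq_sym.
Qed.

Lemma T0_L2 x tj tj' w : sg tj = tj' -> sg tj' = tj -> c = tj - tj' ->
  T0 (Lop x tj' j' (Lop x tj j w)) = Lop (sg x) tj' j' (Lop (sg x) tj j (T0 w)).
Proof.
move=> s1 s2 hc; apply/ffunP=> -[a m].
rewrite [LHS]ffunE /=.
rewrite (@LopLop x tj tj' w a m (fun nu e b => w (nu, upd (upd m j e) j' b))) //.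
rewrite (@LopLop x tj tj' w a (swapl m j j') (fun nu e b => w (nu, upd (upd m j e) j' b))); last first.
  by move=> nu e b; rewrite upd_swapl_jj.
rewrite (@LopLop (sg x) tj tj' (T0 w) a m (fun nu e b => sg (w (nu, upd (upd m j e) j' b)) +
   (if e && ~~ b then tj - tj' else 0) * sg (w (nu, upd (upd m j b) j' e)))); last first.
  by move=> nu e b; rewrite ffunE /= (upd_o _ _ jj') !upd_i swapl_updjj hc.
rewrite swapl_j swapl_j' !rm_Lgen2 s1 s2 hc.
exact: (pair_id a (m j) (m j') (fun nu e b => sg (w (nu, upd (upd m j e) j' b)))).
Qed.
End Gen.

Section Chain.
Variables (N : nat) (R : comNzRingType) (j j' : 'I_N).
Hypothesis jj' : j != j'.
Variable sg : {rmorphism R -> R}.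
Variable t : 'I_N -> R.
Hypothesis sgt : forall i, i != j -> i != j' -> sg (t i) = t i.
Hypothesis sgj : sg (t j) = t j'.
Hypothesis sgj' : sg (t j') = t j.

Local Notation T0 := (T0 j j' sg (t j - t j')).
Local Notation F x := (fun w i => Lop x (t i) i w).

Lemma T0_fold x s w : (forall i, i \in s -> (i != j) && (i != j')) ->
  T0 (foldl (F x) w s) = foldl (F (sg x)) (T0 w) s.
Proof.
elim: s w => [//|i s IH] w hs /=.
have /andP[h1 h2] := hs i (mem_head _ _).
rewrite IH; last by move=> k hk; apply: hs; rewrite inE hk orbT.
by rewrite T0_L1 // sgt.
Qed.

Hypothesis hj : nat_of_ord j' = (nat_of_ord j).+1.

Lemma enum_split : exists s1 s2, enum 'I_N = s1 ++ j :: j' :: s2.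
Proof.
exists (take j (enum 'I_N)), (drop j'.+1 (enum 'I_N)).
have hs : size (enum 'I_N) = N by rewrite size_enum_ord.
rewrite -{1}(cat_take_drop j (enum 'I_N)); congr (_ ++ _).
rewrite (drop_nth j) ?hs //; congr (_ :: _).
  by apply: val_inj; rewrite /= nth_enum_ord.
rewrite (drop_nth j) ?hs -?hj //; congr (_ :: _).
by apply: val_inj; rewrite /= nth_enum_ord.
Qed.

Lemma T0_Mop x w : T0 (Mop t x w) = Mop t (sg x) (T0 w).
Proof.
have [s1 [s2 He]] := enum_split.
have hu : uniq (s1 ++ j :: j' :: s2) by rewrite -He enum_uniq.
rewrite cat_uniq /= !inE negb_or in hu.
case/and5P: hu => _ /andP[hj1 /norP[hj'1 _]] /norP[_ hjs2] hj's2 _.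
have hs1 : forall i, i \in s1 -> (i != j) && (i != j').
  by move=> i hi; rewrite (memPn hj1 i hi) (memPn hj'1 i hi).
have hs2 : forall i, i \in s2 -> (i != j) && (i != j').
  by move=> i hi; rewrite (memPn hjs2 i hi) (memPn hj's2 i hi).
rewrite /Mop He !foldl_cat /= (T0_fold _ _ hs2) T0_L2 // T0_fold //.
Qed.

Local Notation S := (sop sg (t j) (t j') j j').

Lemma sop_Cop x w : S (Cop t x w) = Cop t (sg x) (S w).
Proof.
apply/ffunP=> m; rewrite (sopE jj') /Cop !ffunE.
set W0 := [ffun p : bool * lam N => if p.1 then 0 else w p.2].
have -> : sg (Mop t x W0 (true, m)) +
   (if m j && ~~ m j' then t j - t j' else 0) * sg (Mop t x W0 (true, swapl m j j'))
   = T0 (Mop t x W0) (true, m) by rewrite ffunE.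
rewrite T0_Mop; congr (Mop _ _ _ _); apply/ffunP=> -[a l].
rewrite [RHS]ffunE /= (sopE jj') !ffunE /=.
by case: a; rewrite ?rmorph0 ?mulr0 ?addr0.
Qed.

Lemma sgt_perm i : sg (t i) = t (tperm j j' i).
Proof.
case: (eqVneq i j) => [->|h1]; first by rewrite tpermL.
case: (eqVneq i j') => [->|h2]; first by rewrite tpermR.
by rewrite tpermD 1?eq_sym // sgt.
Qed.

Lemma sop_ev : S (ev R (ones N)) = ev R (ones N).
Proof.
apply/ffunP=> m; rewrite (sopE jj') !ffunE rmorph_nat.
have [hj1|_] := boolP (m j && ~~ m j'); last by rewrite mul0r addr0.
have -> : (swapl m j j' == ones N) = false.
  apply/negbTE/eqP => E; move/andP: hj1 => [_ h].
  by move/ffunP: E => /(_ j); rewrite swapl_j ffunE => E; rewrite E in h.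
by rewrite rmorph0 mulr0 addr0.
Qed.

Lemma sop_foldr w0 s :
  S (foldr (fun i w => Cop t (- t i) w) w0 s) =
  foldr (fun i w => Cop t (- t i) w) (S w0) (map (tperm j j') s).
Proof.
elim: s => [//|i s IH] /=; by rewrite sop_Cop rmorphN sgt_perm IH.
Qed.
End Chain.

Section Comm.
Variables (N : nat) (R : comNzRingType) (t : 'I_N -> R).

Definition Vec2 := {ffun bool * bool * lam N -> R}.
Definition L1 x tt (i : 'I_N) (W : Vec2) : Vec2 :=
  [ffun p : bool * bool * lam N => Lgen p.1.1 (p.2 i) x tt (fun mu b => W (mu, p.1.2, upd p.2 i b))].
Definition L2 x tt (i : 'I_N) (W : Vec2) : Vec2 :=
  [ffun p : bool * bool * lam N => Lgen p.1.2 (p.2 i) x tt (fun nu b => W (p.1.1, nu, upd p.2 i b))].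
Definition Rop u (W : Vec2) : Vec2 :=
  [ffun p : bool * bool * lam N => Lgen p.1.1 p.1.2 u 0 (fun c d => W (c, d, p.2))].

Lemma Lgen_exch a s x tt a' s' y t' (F : bool -> bool -> bool -> bool -> R) :
  Lgen a s x tt (fun mu b => Lgen a' s' y t' (fun nu e => F mu b nu e)) =
  Lgen a' s' y t' (fun nu e => Lgen a s x tt (fun mu b => F mu b nu e)).
Proof. by case: a; case: s; case: a'; case: s' => /=; ring. Qed.

Lemma ybe_id a1 a2 s x y tt (G : bool -> bool -> bool -> R) :
  Lgen a1 a2 (x - y) 0 (fun c d => Lgen c s x tt (fun mu b => Lgen d b y tt (fun nu e => G mu nu e))) =
  Lgen a2 s y tt (fun nu b => Lgen a1 b x tt (fun mu e => Lgen mu nu (x - y) 0 (fun c d => G c d e))).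
Proof. by case: a1; case: a2; case: s => /=; ring. Qed.

Lemma L1L2C x y tt tt' i k W : i != k ->
  L1 x tt i (L2 y tt' k W) = L2 y tt' k (L1 x tt i W).
Proof.
move=> hik; apply/ffunP=> -[[a1 a2] m]; rewrite !ffunE /=.
rewrite (@eq_Lgen _ _ _ _ _ _ (fun mu b => Lgen a2 (m k) y tt'
   (fun nu e => W (mu, nu, upd (upd m i b) k e)))); last first.
  by move=> mu b; rewrite ffunE /= upd_o 1?eq_sym.
rewrite Lgen_exch; apply: eq_Lgen => nu e; rewrite ffunE /= upd_o //.
by apply: eq_Lgen => mu b; rewrite upd_updC.
Qed.

Lemma ybe x y tt i W :
  Rop (x - y) (L1 x tt i (L2 y tt i W)) = L2 y tt i (L1 x tt i (Rop (x - y) W)).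
Proof.
apply/ffunP=> -[[a1 a2] m]; rewrite !ffunE /=.
rewrite (@eq_Lgen _ _ _ _ _ _ (fun c d => Lgen c (m i) x tt (fun mu b => Lgen d b y tt
   (fun nu e => W (mu, nu, upd m i e))))); last first.
  move=> c d; rewrite ffunE /=; apply: eq_Lgen => mu b.
  by rewrite ffunE /= upd_i; apply: eq_Lgen => nu e; rewrite upd_upd.
rewrite ybe_id; apply: eq_Lgen => nu b; rewrite ffunE /= upd_i.
by apply: eq_Lgen => mu e; rewrite ffunE /= upd_upd.
Qed.


End Comm.

Section Folds.
Variables (I : eqType) (V : Type) (f g : I -> V -> V).

Lemma comm_fold i s v : i \notin s ->
  (forall k v, k \in s -> f i (g k v) = g k (f i v)) ->
  f i (foldl (fun w k => g k w) v s) = foldl (fun w k => g k w) (f i v) s.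
Proof.
elim: s v => [//|k s IH] v /=; rewrite inE negb_or => /andP[hik hi] hc.
rewrite IH //; last by move=> q u hq; apply: hc; rewrite inE hq orbT.
by rewrite hc // mem_head.
Qed.

Lemma inter_fold s v : uniq s ->
  (forall i k v, i != k -> f i (g k v) = g k (f i v)) ->
  foldl (fun w k => f k w) (foldl (fun w k => g k w) v s) s =
  foldl (fun w k => f k (g k w)) v s.
Proof.
move=> hu hc; elim: s v hu => [//|i s IH] v /= /andP[his hu].
rewrite comm_fold //; first exact: IH.
by move=> k u hk; apply: hc; apply: contraNneq his => ->.
Qed.
End Folds.

Lemma sandwich_fold (I : Type) (V V' : Type) (r : V -> V') (h1 : I -> V -> V) (h2 : I -> V' -> V') s v :
  (forall i v, r (h1 i v) = h2 i (r v)) ->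
  r (foldl (fun w k => h1 k w) v s) = foldl (fun w k => h2 k w) (r v) s.
Proof. by move=> hc; elim: s v => [//|i s IH] v /=; rewrite IH hc. Qed.

Section Comm2.
Variables (N : nat) (R : comNzRingType) (t : 'I_N -> R).

Definition M1 x (W : Vec2 N R) := foldl (fun W i => L1 x (t i) i W) W (enum 'I_N).
Definition M2 x (W : Vec2 N R) := foldl (fun W i => L2 x (t i) i W) W (enum 'I_N).
Definition slice1 (W : Vec2 N R) a2 : Vec0 N R := [ffun p : bool * lam N => W (p.1, a2, p.2)].
Definition slice2 (W : Vec2 N R) a1 : Vec0 N R := [ffun p : bool * lam N => W (a1, p.1, p.2)].

Lemma slice1_L1 x tt i W a2 : slice1 (L1 x tt i W) a2 = Lop x tt i (slice1 W a2).
Proof.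
apply/ffunP=> -[a m]; rewrite LopE !ffunE /=.
by apply: eq_Lgen => mu b; rewrite ffunE.
Qed.
Lemma slice2_L2 x tt i W a1 : slice2 (L2 x tt i W) a1 = Lop x tt i (slice2 W a1).
Proof.
apply/ffunP=> -[a m]; rewrite LopE !ffunE /=.
by apply: eq_Lgen => mu b; rewrite ffunE.
Qed.
Lemma slice1_M1 x W a2 : slice1 (M1 x W) a2 = Mop t x (slice1 W a2).
Proof.
rewrite /M1 /Mop; refine (@sandwich_fold _ _ _ (fun W => slice1 W a2) (fun i => L1 x (t i) i)
  (fun i => Lop x (t i) i) _ _ (fun i v => slice1_L1 x (t i) i v a2)).
Qed.
Lemma slice2_M2 x W a1 : slice2 (M2 x W) a1 = Mop t x (slice2 W a1).
Proof.
rewrite /M2 /Mop; exact: (@sandwich_fold _ _ _ (fun W => slice2 W a1) (fun i => L2 x (t i) i)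
  (fun i => Lop x (t i) i) _ _ (fun i v => slice2_L2 x (t i) i v a1)).
Qed.

Lemma Mop0 x : Mop t x 0 = 0.
Proof.
rewrite /Mop; elim: (enum 'I_N) => [//|i s IH] /=.
suff -> : Lop x (t i) i 0 = 0 by [].
apply/ffunP=> -[a m]; rewrite LopE ffunE.
by rewrite (@eq_Lgen _ _ _ _ _ _ (fun _ _ => 0)) => [|mu b]; [case: a; case: (m i) => /=; ring | rewrite ffunE].
Qed.

Lemma RM1M2 u x y W : u = x - y -> Rop u (M1 x (M2 y W)) = M2 y (M1 x (Rop u W)).
Proof.
move=> ->; rewrite /M1 /M2 inter_fold ?enum_uniq //; last by move=> *; apply: L1L2C.
rewrite (@inter_fold _ _ (fun i => L2 y (t i) i) (fun i => L1 x (t i) i)) ?enum_uniq //;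
  last by move=> i k v hik; rewrite L1L2C // eq_sym.
by apply: sandwich_fold => i v; rewrite ybe.
Qed.

Lemma Cop_comm x y w : Cop t x (Cop t y w) = Cop t y (Cop t x w).
Proof.
set W0 : Vec2 N R := [ffun p => if p.1.1 || p.1.2 then 0 else w p.2].
have h1 : forall m, Cop t x (Cop t y w) m = M1 x (M2 y W0) (true, true, m).
  move=> m; have -> : M1 x (M2 y W0) (true, true, m) = slice1 (M1 x (M2 y W0)) true (true, m)
    by rewrite ffunE.
  rewrite slice1_M1 /Cop ffunE; congr (Mop _ _ _ _); apply/ffunP=> -[a l]; rewrite !ffunE /=.
  have -> : M2 y W0 (a, true, l) = slice2 (M2 y W0) a (true, l) by rewrite ffunE.
  rewrite slice2_M2; case: a => /=.
    suff -> : slice2 W0 true = 0 by rewrite Mop0 ffunE.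
    by apply/ffunP => p; rewrite !ffunE.
  by congr (Mop _ _ _ _); apply/ffunP => -[b l']; rewrite !ffunE.
have h2 : forall m, Cop t y (Cop t x w) m = M2 y (M1 x W0) (true, true, m).
  move=> m; have -> : M2 y (M1 x W0) (true, true, m) = slice2 (M2 y (M1 x W0)) true (true, m)
    by rewrite ffunE.
  rewrite slice2_M2 /Cop ffunE; congr (Mop _ _ _ _); apply/ffunP=> -[a l]; rewrite !ffunE /=.
  have -> : M1 x W0 (true, a, l) = slice1 (M1 x W0) a (true, l) by rewrite ffunE.
  rewrite slice1_M1; case: a => /=.
    suff -> : slice1 W0 true = 0 by rewrite Mop0 ffunE.
    by apply/ffunP => p; rewrite !ffunE orbT.
  by congr (Mop _ _ _ _); apply/ffunP => -[b l']; rewrite !ffunE orbF.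
have hR : Rop (x - y) W0 = W0.
  apply/ffunP=> -[[a1 a2] m]; rewrite !ffunE /=.
  by case: a1; case: a2; rewrite /= !ffunE /= ?mulr0 ?addr0.
apply/ffunP=> m; rewrite h1 h2.
have := congr1 (fun V : Vec2 N R => V (true, true, m)) (@RM1M2 (x - y) x y W0 (erefl _)).
by rewrite hR /= ffunE /=.
Qed.
End Comm2.

Section BvecGen.
Variables (N : nat) (R : comNzRingType) (j j' : 'I_N).
Hypothesis hj : nat_of_ord j' = (nat_of_ord j).+1.
Variable sg : {rmorphism R -> R}.
Variable t : 'I_N -> R.
Hypothesis sgt : forall i, i != j -> i != j' -> sg (t i) = t i.
Hypothesis sgj : sg (t j) = t j'.
Hypothesis sgj' : sg (t j') = t j.

Lemma jj' : j != j'.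
Proof. by apply/eqP => E; move: hj; rewrite E => /eqP; rewrite -[X in X == _]addn0 -addn1 eqn_add2l. Qed.

Lemma sop_bvec l : sop sg (t j) (t j') j j' (bvec t l) = bvec t (swapl l j j').
Proof.
rewrite /bvec (sop_foldr jj' sgt sgj sgj' hj) (sop_ev jj').
have [s1 [s2 He]] := enum_split hj.
have hu : uniq (s1 ++ j :: j' :: s2) by rewrite -He enum_uniq.
rewrite cat_uniq /= !inE negb_or in hu.
case/and5P: hu => _ /andP[hj1 /norP[hj'1 _]] /norP[_ hjs2] hj's2 _.
have key : forall s, j \notin s -> j' \notin s ->
    map (tperm j j') [seq i <- s | ~~ l i] = [seq i <- s | ~~ swapl l j j' i].
  move=> s h1 h2; rewrite (@eq_in_filter _ _ (fun i => ~~ l i)); last first.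
    by move=> i hi; rewrite swapl_o ?(memPn h1 i hi) ?(memPn h2 i hi).
  rewrite map_id_in // => i; rewrite mem_filter => /andP[_ hi].
  by rewrite tpermD ?(memPn h1 i hi) ?(memPn h2 i hi) // eq_sym ?(memPn h1 i hi) ?(memPn h2 i hi).
rewrite He -[j :: j' :: s2]/([:: j; j'] ++ s2) !filter_cat !map_cat !foldr_cat.
rewrite (key s1) // (key s2) //.
rewrite /= swapl_j (swapl_j' jj').
case: (l j); case: (l j') => /=; rewrite ?tpermL ?tpermR //.
by rewrite Cop_comm.
Qed.
End BvecGen.

Lemma msym_X (n : nat) (Rr : comNzRingType) (s : 'S_n) (i : 'I_n) :
  msym s ('X_i : {mpoly Rr[n]}) = 'X_(s i).
Proof.
rewrite msymX; congr 'X_[_]; apply/mnmP => k; rewrite !mnmE.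
by rewrite (canF_eq (permK s)).
Qed.

Local Open Scope quotient_scope.

Lemma frac_repr (R : idomainType) (x : {fraction R}) :
  x * tofrac (generic_quotient.repr x).2 = tofrac (generic_quotient.repr x).1.
Proof.
set r := generic_quotient.repr x.
have Ex : x = \pi_({fraction R}) r by rewrite /r generic_quotient.reprK.
have hd := denom_ratioP r.
have E : \pi_({fraction R}) (FracField.mulf r (Ratio r.2 1)) = \pi_({fraction R}) (Ratio r.1 1).
  apply/(@eqquotP _ (@FracField.equivf R) (FracField.type R)); rewrite /= FracField.equivfE /FracField.mulf !numden_Ratio ?mulf_neq0 ?oner_neq0 //.
  by rewrite !mulr1 mulrC.
rewrite FracField.pi_mul in E.
rewrite {1}Ex; unlock tofrac; exact: E.
Qed.

Section SjK.
Variables (R : idomainType) (phi : {rmorphism R -> R}).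
Hypothesis phi_inj : injective phi.

Definition sjKg (x : {fraction R}) : {fraction R} :=
  tofrac (phi (generic_quotient.repr x).1) / tofrac (phi (generic_quotient.repr x).2).

Lemma phi_neq0 b : b != 0 -> phi b != 0.
Proof. by move=> hb; apply/eqP => h; move/eqP: hb; apply; apply: phi_inj; rewrite h rmorph0. Qed.

Lemma frac_eq a b (x : {fraction R}) : b != 0 -> x = tofrac a / tofrac b ->
  sjKg x = tofrac (phi a) / tofrac (phi b).
Proof.
move=> hb Ex; rewrite /sjKg.
have E := frac_repr x.
case: (generic_quotient.repr x) E => [[n d] /= hd] E.
rewrite Ex in E.
have E2 : a * d = n * b.
  apply/eqP; rewrite -tofrac_eq !tofracM -E mulrAC divfK ?tofrac_eq0 //.
apply/eqP; rewrite eqr_div ?tofrac_eq0 ?phi_neq0 // -!tofracM tofrac_eq.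
by rewrite -!rmorphM mulrC E2 mulrC.
Qed.

Lemma sjKg_repr (x : {fraction R}) : x = tofrac (generic_quotient.repr x).1 / tofrac (generic_quotient.repr x).2.
Proof.
by rewrite -frac_repr mulfK // tofrac_eq0 denom_ratioP.
Qed.

Lemma sjKg_tofrac p : sjKg (tofrac p) = tofrac (phi p).
Proof.
by rewrite (@frac_eq p 1) ?oner_neq0 ?rmorph1 ?tofrac1 ?divr1.
Qed.

Lemma sjKg1 : sjKg 1 = 1.
Proof. by rewrite -tofrac1 sjKg_tofrac rmorph1. Qed.

Lemma sjKgM x y : sjKg (x * y) = sjKg x * sjKg y.
Proof.
have hx := denom_ratioP (generic_quotient.repr x); have hy := denom_ratioP (generic_quotient.repr y).
rewrite (@frac_eq ((generic_quotient.repr x).1 * (generic_quotient.repr y).1) ((generic_quotient.repr x).2 * (generic_quotient.repr y).2)) ?mulf_neq0 //; last first.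
  by rewrite {1}[x]sjKg_repr {1}[y]sjKg_repr !tofracM mulf_div.
by rewrite /sjKg !rmorphM ?tofracM mulf_div.
Qed.

Lemma sjKgV p : sjKg ((tofrac p)^-1) = (tofrac (phi p))^-1.
Proof.
have [->|hp] := eqVneq p 0; first by rewrite !rmorph0 invr0; have := sjKg_tofrac 0; rewrite !rmorph0.
by rewrite (@frac_eq 1 p) ?rmorph1 ?tofrac1 ?div1r.
Qed.
End SjK.

Lemma swapl_tperm N (l : lam N) (j j' : 'I_N) b : j != j' -> swapl l j j' (tperm j j' b) = l b.
Proof.
move=> hjj.
case: (eqVneq b j) => [->|h1]; first by rewrite tpermL swapl_j'.
case: (eqVneq b j') => [->|h2]; first by rewrite tpermR swapl_j.
by rewrite tpermD 1?eq_sym // swapl_o.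
Qed.

Theorem proposition2p13 (N : nat) (hN : (2 <= N)%N) (j j' : 'I_N)
    (hj : nat_of_ord j' = (nat_of_ord j).+1) (l : lam N) :
  sopP j j' (bP l) = bP (swapl l j j') /\
  sopK j j' (bK l) = bK (swapl l j j').
Proof.
have hjj : j != j' := jj' hj.
have HP : sopP j j' (bP l) = bP (swapl l j j').
  apply: (@sop_bvec N (Pol N) j j' hj (msym (tperm j j')) (@tP N)).
  - move=> i h1 h2; rewrite /tP; etransitivity; first exact: msym_X.
    by rewrite tpermD // eq_sym.
  - by rewrite /tP; etransitivity; first exact: msym_X; rewrite tpermL.
  - by rewrite /tP; etransitivity; first exact: msym_X; rewrite tpermR.
split => //.
pose phi : {rmorphism Pol N -> Pol N} := msym (tperm j j').
have phi_inj : injective phi := inj_msym _.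
pose Pf (l : lam N) : Kf N := \prod_(b : 'I_N | ~~ l b) \prod_(a : 'I_N | l a)
                 (tofrac (tP a - tP b))^-1.
have PK : forall l m, bK l m = Pf l * tofrac (bP l m) by move=> l0 m; rewrite ffunE.
have SP : sjKg phi (Pf l) = Pf (swapl l j j').
  rewrite /Pf (big_morph (sjKg phi) (sjKgM phi_inj) (@sjKg1 _ phi phi_inj)).
  under eq_bigr => b _ do rewrite (big_morph (sjKg phi) (sjKgM phi_inj) (@sjKg1 _ phi phi_inj)).
  rewrite (reindex_inj (@perm_inj _ (tperm j j'))) /=.
  have sw : forall b, swapl l j j' b = l (tperm j j' b).
    by move=> b; rewrite -{1}(tpermK j j' b) swapl_tperm.
  apply: eq_big => [b|b _]; first by rewrite sw.
  rewrite (reindex_inj (@perm_inj _ (tperm j j'))) /=.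
  apply: eq_big => [a|a _]; first by rewrite sw.
  rewrite (sjKgV phi_inj) (rmorphB phi) /= /tP; congr (tofrac (_ - _))^-1;
    (etransitivity; first exact: msym_X); by rewrite tpermK.
apply/ffunP => m.
rewrite (sopE hjj) !PK.
change (sjK j j') with (sjKg phi).
rewrite !(sjKgM phi_inj) !(sjKg_tofrac phi_inj) SP -HP (sopE hjj).
case: (m j && ~~ m j'); rewrite ?mul0r ?addr0 ?tofrac0 ?rmorph0 ?mul0r ?addr0 //.
rewrite tofracD tofracM tofracB mulrDr; congr (_ + _); by rewrite mulrCA.
Qed.
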